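(* Let $\epsilon>0$ and $p=e^{\epsilon}/(e^{\epsilon}+1)$. Let $n\ge1$ users $u_1,\dots,u_n$, where user $u_i$ holds a value $v_i\in[-1,1]$ and a privacy preference $\epsilon_u^i\in\mathbb{R}$. Each user independently sets $v_i'=v_i$ if $\epsilon\le\epsilon_u^i$ and $v_i'=\bot$ otherwise, samples $s_i\in\{0,1\}$ uniformly at random, and draws $b_i\in\{0,1\}$ with $$\Pr[b_i=1]=\begin{cases}\frac{1-e^{\epsilon}}{1+e^{\epsilon}}\cdot\frac{v_i'}{2}+\frac12 & \text{if } s_i=0,\ v_i'\in[-1,1],\\ \frac{e^{\epsilon}-1}{e^{\epsilon}+1}\cdot\frac{v_i'}{2}+\frac12 & \text{if } s_i=1,\ v_i'\in[-1,1],\\ \frac{1}{e^{\epsilon}+1} & \text{if } v_i'=\bot \ (\text{either } s_i),\end{cases}$$ and reports $\langle s_i,b_i\rangle$. Let $$f_{\mathrm{POS}}=\frac{\#\{i:\langle s_i,b_i\rangle=\langle1,1\rangle\}}{\#\{i:s_i=1\}},\qquad f_{\mathrm{NEG}}=\frac{\#\{i:\langle s_i,b_i\rangle=\langle0,1\rangle\}}{\#\{i:s_i=0\}},$$ let $s=\sum_{i:\,\epsilon_u^i\ge\epsilon} v_i$ be the sum of the truthfully provided values and $f_\bot=\#\{i:\epsilon_u^i<\epsilon\}/n$ the fraction of users providing a null value, and define $$s^*=\frac{n}{2p-1}\left(f_{\mathrm{POS}}-f_{\mathrm{NEG}}\right),\qquad f_\bot^*=\frac{1-f_{\mathrm{POS}}-f_{\mathrm{NEG}}}{2p-1}.$$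 Then, conditionally on the event that $\#\{i:s_i=1\}\ge1$ and $\#\{i:s_i=0\}\ge1$, $s^*$ and $f_\bot^*$ are unbiased estimators of $s$ and $f_\bot$ respectively, i.e. $\mathbb{E}[s^*]=s$ and $\mathbb{E}[f_\bot^*]=f_\bot$.
   Context: All randomness is over the users' independent coin flips; the values $v_i$ and preferences $\epsilon_u^i$ are fixed. *)

(* Defs.v *)
From HB Require Import structures.
From mathcomp Require Import all_boot all_order all_algebra.
From mathcomp Require Import all_classical all_reals all_analysis.
Set Implicit Arguments. Unset Strict Implicit. Unset Printing Implicit Defensive.
Import Order.TTheory GRing.Theory Num.Theory.
Local Open Scope ring_scope.

Section Defs.
Variable R : realType.

Definition pp (eps : R) : R := expR eps / (expR eps + 1).

(* user i is truthful (v_i' = v_i) iff eps <= eps_u^i, otherwise v_i' = bottom *)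
Definition prob_b1 (eps v eu : R) (s : bool) : R :=
  if eps <= eu then
    (if s then (expR eps - 1) / (expR eps + 1) * (v / 2) + 1 / 2
     else (1 - expR eps) / (1 + expR eps) * (v / 2) + 1 / 2)
  else 1 / (expR eps + 1).

(* An outcome of the whole protocol: for each user the report (s_i, b_i). *)
Definition outcome (n : nat) := {ffun 'I_n -> bool * bool}.

(* Probability of report (s,b) for one user: s uniform, then b by prob_b1. *)
Definition user_prob (eps v eu : R) (sb : bool * bool) : R :=
  (1 / 2) * (if sb.2 then prob_b1 eps v eu sb.1 else 1 - prob_b1 eps v eu sb.1).

(* Users are independent: product measure. *)
Definition Prob (n : nat) (eps : R) (v eu : 'I_n -> R) (w : outcome n) : R :=
  \prod_(i < n) user_prob eps (v i) (eu i) (w i).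

Definition n_s1 n (w : outcome n) : nat := #|[set i | (w i).1]|.
Definition n_s0 n (w : outcome n) : nat := #|[set i | ~~ (w i).1]|.
Definition n_11 n (w : outcome n) : nat := #|[set i | w i == (true, true)]|.
Definition n_01 n (w : outcome n) : nat := #|[set i | w i == (false, true)]|.

Definition f_POS n (w : outcome n) : R := (n_11 w)%:R / (n_s1 w)%:R.
Definition f_NEG n (w : outcome n) : R := (n_01 w)%:R / (n_s0 w)%:R.

Definition s_star n (eps : R) (w : outcome n) : R :=
  n%:R / (2 * pp eps - 1) * (f_POS w - f_NEG w).
Definition fbot_star n (eps : R) (w : outcome n) : R :=
  (1 - f_POS w - f_NEG w) / (2 * pp eps - 1).

Definition s_true n (eps : R) (v eu : 'I_n -> R) : R :=
  \sum_(i < n | eps <= eu i) v i.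
Definition fbot_true n (eps : R) (eu : 'I_n -> R) : R :=
  #|[set i : 'I_n | eu i < eps]|%:R / n%:R.

Definition cond_ev n (w : outcome n) : bool := (0 < n_s1 w)%N && (0 < n_s0 w)%N.

Definition Pr_cond n (eps : R) (v eu : 'I_n -> R) : R :=
  \sum_(w : outcome n | cond_ev w) Prob eps v eu w.

Definition condE n (eps : R) (v eu : 'I_n -> R) (X : outcome n -> R) : R :=
  (\sum_(w : outcome n | cond_ev w) Prob eps v eu w * X w) / Pr_cond eps v eu.

End Defs.

(* Main.v *)
Require Import Defs.
From HB Require Import structures.
From mathcomp Require Import all_boot all_order all_algebra.
From mathcomp Require Import all_classical all_reals all_analysis.
From mathcomp Require Import perm ring lra.
Set Implicit Arguments. Unset Strict Implicit.
Import Order.TTheory GRing.Theory Num.Theory.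
Local Open Scope ring_scope.

Definition sp {n} (w : outcome n) : {ffun 'I_n -> bool} := [ffun j => (w j).1].

Lemma inner (R : realType) (eps : R) n (v eu : 'I_n -> R) (i : 'I_n)
  (s : {ffun 'I_n -> bool}) (h : bool -> R) :
  \sum_(w : outcome n | sp w == s) Prob eps v eu w * h (w i).2 =
  (1/2)^+n * (prob_b1 eps (v i) (eu i) (s i) * h true +
              (1 - prob_b1 eps (v i) (eu i) (s i)) * h false).
Proof.
pose F (j : 'I_n) (x : bool * bool) : R :=
  if x.1 == s j then user_prob eps (v j) (eu j) x * (if j == i then h x.2 else 1) else 0.
transitivity (\sum_(w : outcome n) \prod_j F j (w j)).
  rewrite big_mkcond /=; apply: eq_bigr => w _.
  rewrite /F; case: eqP => [<-|/eqP Hne].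
    rewrite /Prob.
    under [RHS]eq_bigr => j _ do rewrite ffunE eqxx.
    by rewrite [RHS]big_split /= -big_mkcond big_pred1_eq.
  have [j Hj] : exists j, (w j).1 != s j.
    apply/existsP; apply: contraR Hne => /existsPn H.
    apply/eqP/ffunP => j; rewrite ffunE; exact/eqP/negPn/H.
  by rewrite (bigD1 j) //= (negbTE Hj) mul0r.
rewrite -bigA_distr_bigA /=.
rewrite (bigD1 i) //=.
have Hc : forall j, j != i -> \sum_x F j x = 1/2.
  move=> j Hji; rewrite -(pair_big xpredT xpredT (fun a b => F j (a, b))) /=.
  rewrite big_bool /= !big_bool /F /= (negbTE Hji) /user_prob /=.
  case: (s j) => /=; rewrite ?mulr0 ?addr0 ?add0r !mulr1 -mulrDr subrKC mulr1 //.
rewrite (eq_bigr (fun _ => 1/2) Hc) prodr_const cardC1 card_ord.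
rewrite -(pair_big xpredT xpredT (fun a b => F i (a, b))) /=.
rewrite big_bool /= !big_bool /F /= eqxx /user_prob /=.
have n0 : (0 < n)%N by apply: leq_ltn_trans (ltn_ord i).
have -> : (1/2:R)^+n = 1/2 * (1/2)^+n.-1 by rewrite -exprS prednK.
case: (s i) => /=; rewrite ?mulr0 ?addr0 ?add0r; ring.
Qed.

Lemma Lsum (R : realType) (eps : R) n (v eu : 'I_n -> R) (i : 'I_n)
  (K : {ffun 'I_n -> bool} -> R) (h : bool -> R) :
  \sum_(w : outcome n) Prob eps v eu w * (K (sp w) * h (w i).2) =
  \sum_(s : {ffun 'I_n -> bool}) K s * ((1/2)^+n * (prob_b1 eps (v i) (eu i) (s i) * h true +
              (1 - prob_b1 eps (v i) (eu i) (s i)) * h false)).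
Proof.
rewrite (partition_big sp xpredT) //=; apply: eq_bigr => s _.
rewrite -inner mulr_sumr; apply: eq_bigr => w /eqP ->.
by rewrite mulrCA.
Qed.

Definition nsc n (c : bool) (s : {ffun 'I_n -> bool}) : nat := #|[set k | s k == c]|.
Definition condS n (s : {ffun 'I_n -> bool}) : bool := (0 < nsc true s)%N && (0 < nsc false s)%N.
Definition Kc (R : realType) n (c : bool) (i : 'I_n) (s : {ffun 'I_n -> bool}) : R :=
  (if condS s && (s i == c) then 1 else 0) / (nsc c s)%:R.

Lemma sum_ind (R : realType) n (P : pred 'I_n) :
  \sum_(i < n) (if P i then (1:R) else 0) = #|[set i | P i]|%:R.
Proof.
rewrite -big_mkcond (eq_bigl (mem (finset P))) ?sumr_const // => i; by rewrite -[RHS]/(i \in finset P) finset.in_set.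
Qed.

Lemma cond_sp n (w : outcome n) : cond_ev w = condS (sp w).
Proof.
rewrite /cond_ev /condS /n_s1 /n_s0 /nsc.
congr (((0 < _)%N) && ((0 < _)%N)); apply: eq_card => k; rewrite !inE ffunE.
  by rewrite eqb_id.
by rewrite eqbF_neg.
Qed.

Lemma pointwise (R : realType) n (c : bool) (w : outcome n) :
  (if cond_ev w then #|[set i | w i == (c,true)]|%:R / #|[set i | (w i).1 == c]|%:R else 0)
  = \sum_i Kc R c i (sp w) * (if (w i).2 then 1 else 0).
Proof.
rewrite cond_sp /Kc.
have -> : #|[set i | (w i).1 == c]| = nsc c (sp w).
  by apply: eq_card => k; rewrite !inE ffunE.
case: (condS (sp w)) => /=.
  transitivity (\sum_i (if ((w i).1 == c) && (w i).2 then (1:R) else 0) * (nsc c (sp w))%:R^-1).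
    rewrite -mulr_suml sum_ind; congr (_%:R / _).
    by apply: eq_card => k; rewrite !finset.inE; case: (w k) => a b; case: b; rewrite ?andbT ?andbF //; case: c; case: a.
  apply: eq_bigr => i _; rewrite ffunE.
  by case: (w i) => a b; case: a; case: b; case: c; rewrite /= ?mulr1 ?mulr0 ?mul1r ?mul0r.
by rewrite big1 // => i _; rewrite !mul0r.
Qed.

Definition Ac (R : realType) n (c : bool) (i : 'I_n) : R :=
  \sum_(s : {ffun 'I_n -> bool}) Kc R c i s * (1/2)^+n.

Lemma Nc (R : realType) (eps : R) n (v eu : 'I_n -> R) (c : bool) :
  \sum_(w : outcome n | cond_ev w) Prob eps v eu w *
     (#|[set i | w i == (c,true)]|%:R / #|[set i | (w i).1 == c]|%:R)
  = \sum_i prob_b1 eps (v i) (eu i) c * Ac R c i.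
Proof.
rewrite big_mkcond /=.
under eq_bigr => w _.
  have -> : (if cond_ev w then Prob eps v eu w *
     (#|[set i | w i == (c,true)]|%:R / #|[set i | (w i).1 == c]|%:R) else 0)
     = Prob eps v eu w * (if cond_ev w then 
     (#|[set i | w i == (c,true)]|%:R / #|[set i | (w i).1 == c]|%:R) else 0 : R).
    by case: (cond_ev w); rewrite ?mulr0.
  rewrite pointwise mulr_sumr.
  over.
rewrite exchange_big /=; apply: eq_bigr => i _.
rewrite (Lsum eps v eu i (Kc R c i) (fun b : bool => if b then 1 else 0)) /Ac mulr_sumr; apply: eq_bigr => s _.
rewrite /Kc; case: (s i =P c) => [->|/eqP Hne]; rewrite ?eqxx ?andbT ?(negbTE Hne) ?andbF.
  rewrite mulr1 mulr0 addr0; ring.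
by rewrite /= !mul0r mulr0.
Qed.

Definition permf n (i j : 'I_n) (s : {ffun 'I_n -> bool}) : {ffun 'I_n -> bool} :=
  [ffun k => s (tperm i j k)].

Lemma permf_inj n (i j : 'I_n) : injective (permf i j).
Proof.
move=> s t /ffunP H; apply/ffunP => k.
by have := H (tperm i j k); rewrite !ffunE tpermK.
Qed.

Lemma nsc_perm n (i j : 'I_n) c s : nsc c (permf i j s) = nsc c s.
Proof.
rewrite /nsc -(card_preimset [set k | s k == c] (@perm_inj _ (tperm i j))).
by apply: eq_card => k; rewrite !finset.inE ffunE.
Qed.

Lemma Ac_sym (R : realType) n c (i j : 'I_n) : Ac R c i = Ac R c j.
Proof.
rewrite /Ac (reindex_inj (@permf_inj n i j)) /=; apply: eq_bigr => s _.
by rewrite /Kc /condS !nsc_perm ffunE tpermL.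
Qed.

Definition Dn (R : realType) n : R :=
  \sum_(s : {ffun 'I_n -> bool}) (if condS s then 1 else 0) * (1/2)^+n.

Lemma sum_Ac (R : realType) n c : \sum_(i < n) Ac R c i = Dn R n.
Proof.
rewrite /Ac /Dn exchange_big /=; apply: eq_bigr => s _.
rewrite -mulr_suml; congr (_ * _).
rewrite /Kc; case Hc: (condS s) => /=.
  rewrite -mulr_suml sum_ind.
  have -> : #|[set i | s i == c]| = nsc c s by [].
  rewrite mulfV // pnatr_eq0 -lt0n.
  by move: Hc; rewrite /condS; case: c => /andP[].
by rewrite big1 // => i _; rewrite mul0r.
Qed.

Lemma Pr_cond_D (R : realType) (eps : R) n (v eu : 'I_n -> R) (hn : (1 <= n)%N) :
  Pr_cond eps v eu = Dn R n.
Proof.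
pose i0 : 'I_n := Ordinal hn.
rewrite /Pr_cond big_mkcond /=.
transitivity (\sum_(w : outcome n) Prob eps v eu w *
   ((fun s => if condS s then (1:R) else 0) (sp w) * (fun _ : bool => (1:R)) (w i0).2)).
  by apply: eq_bigr => w _; rewrite /= cond_sp; case: (condS (sp w)); rewrite ?mulr1 ?mulr0.
rewrite (Lsum eps v eu i0 (fun s => if condS s then (1:R) else 0) (fun _ : bool => (1:R))) /Dn; apply: eq_bigr => s _.
by rewrite !mulr1 subrKC mulr1.
Qed.

Lemma Ac_val (R : realType) n c (i : 'I_n) : Ac R c i = Dn R n / n%:R.
Proof.
have n0 : (0 < n)%N by apply: leq_ltn_trans (ltn_ord i).
rewrite -(sum_Ac R n c) (eq_bigr (fun=> Ac R c i)) ?sumr_const ?card_ord.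
  by rewrite -[Ac R c i *+ n]mulr_natr mulfK // pnatr_eq0 -lt0n.
by move=> j _; apply: Ac_sym.
Qed.

Theorem theorem5 (R : realType) (eps : R) (n : nat) (v eu : 'I_n -> R)
  (heps : 0 < eps) (hn : (1 <= n)%N)
  (hv : forall i, -1 <= v i <= 1)
  (hcond : 0 < Pr_cond eps v eu) :
  condE eps v eu (s_star eps) = s_true eps v eu /\
  condE eps v eu (fbot_star eps) = fbot_true eps eu.
Proof.
set E := expR eps.
have E1 : 1 < E by apply: pexpR_gt1.
have E10 : E + 1 != 0 by apply/lt0r_neq0; lra.
have E10' : 1 + E != 0 by apply/lt0r_neq0; lra.
have E1n : E - 1 != 0 by apply/lt0r_neq0; lra.
set k := 2 * pp eps - 1.
have kE : k = (E - 1) / (E + 1) by rewrite /k /pp -/E; field.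
have k0 : k != 0 by rewrite kE mulf_neq0 // invr_eq0.
set D := Pr_cond eps v eu.
have D0 : D != 0 by apply/lt0r_neq0.
have n0 : n%:R != 0 :> R by rewrite pnatr_eq0 -lt0n.
pose q c i := prob_b1 eps (v i) (eu i) c.
have HN : forall c, \sum_(w : outcome n | cond_ev w) Prob eps v eu w *
     (#|[set i | w i == (c,true)]|%:R / #|[set i | (w i).1 == c]|%:R)
     = D / n%:R * \sum_i q c i.
  move=> c; rewrite Nc mulr_sumr; apply: eq_bigr => i _.
  by rewrite Ac_val -(Pr_cond_D eps v eu hn) mulrC.
have fP : forall w : outcome n, f_POS R w = #|[set i | w i == (true,true)]|%:R / #|[set i | (w i).1 == true]|%:R.
  move=> w; rewrite /f_POS /n_11 /n_s1; congr (_ / _%:R).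
  by apply: eq_card => i; rewrite !finset.inE eqb_id.
have fN : forall w : outcome n, f_NEG R w = #|[set i | w i == (false,true)]|%:R / #|[set i | (w i).1 == false]|%:R.
  move=> w; rewrite /f_NEG /n_01 /n_s0; congr (_ / _%:R).
  by apply: eq_card => i; rewrite !finset.inE eqbF_neg.
have Hd : forall i, q true i - q false i = k * (if eps <= eu i then v i else 0).
  move=> i; rewrite /q /prob_b1 kE -/E; case: ifP => _; last by rewrite subrr mulr0.
  by field; do ?split; assumption.
have He : forall i, q true i + q false i = 1 - k * (if eu i < eps then 1 else 0).
  move=> i; rewrite /q /prob_b1 kE -/E ltNge; case: ifP => _ /=.
    rewrite mulr0 subr0; by field; do ?split; assumption.
  by rewrite mulr1; field; do ?split; assumption.
split.
  rewrite /condE.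
  have -> : \sum_(w : outcome n | cond_ev w) Prob eps v eu w * s_star eps w =
     n%:R / k * ((D / n%:R * \sum_i q true i) - (D / n%:R * \sum_i q false i)).
    rewrite -!HN mulrBr !mulr_sumr -sumrB; apply: eq_bigr => w _.
    by rewrite /s_star fP fN -/k; ring.
  rewrite -mulrBr -sumrB (eq_bigr _ (fun i _ => Hd i)) -mulr_sumr.
  rewrite /s_true [RHS]big_mkcond /= -/D.
  by field; rewrite ?D0 ?n0 ?k0.
rewrite /condE.
have -> : \sum_(w : outcome n | cond_ev w) Prob eps v eu w * fbot_star eps w =
   (D - (D / n%:R * \sum_i q true i) - (D / n%:R * \sum_i q false i)) / k.
  rewrite -!HN /D /Pr_cond -!sumrB mulr_suml; apply: eq_bigr => w _.
  by rewrite /fbot_star fP fN -/k; ring.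
have Hsum : \sum_i q true i + \sum_i q false i = n%:R - k * #|[set i | eu i < eps]|%:R.
  rewrite -big_split /= (eq_bigr _ (fun i _ => He i)) sumrB -mulr_sumr sum_ind sumr_const card_ord.
  by [].
have -> : \sum_i q true i = n%:R - k * #|[set i | eu i < eps]|%:R - \sum_i q false i.
  by rewrite -Hsum addrK.
rewrite /fbot_true.
rewrite -/D; by field; rewrite ?D0 ?n0 ?k0.
Qed.
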